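(* Let $A,B,C$ be type expressions. (1) If $\bullet A\cong B\to C$, then $A\cong C\cong\top$. (2) If $\bullet A\simeq B\to C$, then either (a) $A\simeq C\simeq\top$, or (b) there exist type expressions $D,E$ with $A\simeq D\to E$, $\bullet D\simeq B$ and $\bullet E\simeq C$.
   Context: Type expressions: fix a countably infinite set of type variables $X,Y,Z,\dots$. Pseudo type expressions are generated by $A::=X\mid A\to A\mid \bullet A\mid \mu X.A$ ($\mu$ binds $X$; $\alpha$-convertible expressions are identified; $\to$ associates to the right; $\bullet$ binds tighter than $\to$, which binds tighter than $\mu$). $A[B/X]$ denotes capture-avoiding substitution. $\top$ abbreviates $\mu X.\bullet X$, and $\bullet^n A$ denotes $A$ prefixed by $n$ copies of $\bullet$. The tail $t(A)$ is defined by $t(X)=X$, $t(A\to B)=t(B)$, $t(\bullet A)=\bullet t(A)$, $t(\mu X.A)=\mu X.t(A)$; it always has the form $\bullet^{m_0}\mu X_1.\bullet^{m_1}\mu X_2.\cdots\mu X_n.\bullet^{m_n}Y$. $A$ is a $\top$-variant iff $Y=X_i$ for some $1\le i\le n$ with $X_i\notin\{X_{i+1},\dots,X_n\}$ and $m_i+\dots+m_n\ge 1$. $A$ is proper in $X$ iff: a variable $Y$ is proper in $X$ iff $Y\neq X$; $\bullet A$ is always proper in $X$; $A\to B$ is proper in $X$ iff both $A,B$ are proper in $X$ or $B$ is a $\top$-variant; for $Y\ne X$, $\mu Y.A$ is proper in $X$ iff $A$ is proper in $X$ or $\mu Y.A$ is a $\top$-variant. Type expressions are the least set of pseudo type expressions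 containing all type variables, closed under $\to$ and $\bullet$, and containing $\mu X.A$ whenever it contains $A$ and $A$ is proper in $X$. Equality: $\cong$ is the least relation on type expressions such that: $A\cong A$; $A\cong B$ implies $B\cong A$; $A\cong B$ and $B\cong C$ imply $A\cong C$; $A\cong B$ implies $\bullet A\cong\bullet B$; $A\cong C$ and $B\cong D$ imply $A\to B\cong C\to D$; $A\to\top\cong\top$; $\mu X.A\cong A[\mu X.A/X]$; and if $A\cong C[A/X]$ with $C$ proper in $X$, then $A\cong\mu X.C$. $\simeq$ is the least relation satisfying the same closure conditions and additionally $\bullet(A\to B)\simeq\bullet A\to\bullet B$. *)

(* Defs.v *)
(* Type expressions with mu-binders, represented with
   de Bruijn indices so that alpha-convertible expressions are identified. *)
From Stdlib Require Import Arith.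

Inductive ty : Type :=
| TVar : nat -> ty
| TArr : ty -> ty -> ty
| TLat : ty -> ty           (* bullet A *)
| TMu  : ty -> ty.          (* mu X. A ; index 0 in the body is X *)

Fixpoint shift (d c : nat) (A : ty) : ty :=
  match A with
  | TVar n => if n <? c then TVar n else TVar (n + d)
  | TArr A1 A2 => TArr (shift d c A1) (shift d c A2)
  | TLat A1 => TLat (shift d c A1)
  | TMu A1 => TMu (shift d (S c) A1)
  end.

(* capture-avoiding substitution of B for index k (free indices above k
   are decremented, since the binder of k disappears) *)
Fixpoint subst (k : nat) (B : ty) (A : ty) : ty :=
  match A with
  | TVar n => if n <? k then TVar n
              else if n =? k then shift k 0 B
              else TVar (pred n)
  | TArr A1 A2 => TArr (subst k B A1) (subst k B A2)
  | TLat A1 => TLat (subst k B A1)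
  | TMu A1 => TMu (subst (S k) B A1)
  end.

(* C[A/X] where C is the body of a binder mu X. C *)
Definition subst0 (C A : ty) : ty := subst 0 A C.

Definition top : ty := TMu (TLat (TVar 0)).

Fixpoint bullets (n : nat) (A : ty) : ty :=
  match n with 0 => A | S m => TLat (bullets m A) end.

Fixpoint tail (A : ty) : ty :=
  match A with
  | TVar n => TVar n
  | TArr _ B => tail B
  | TLat A1 => TLat (tail A1)
  | TMu A1 => TMu (tail A1)
  end.

(* Information about the final variable Y of a tail
   bullet^{m0} mu X1. ... mu Xn. bullet^{mn} Y :
   - TBound g : Y is bound by one of the X_i (the innermost binder of that
     name, i.e. X_i not in {X_{i+1},...,X_n}), and g says whether
     m_i + ... + m_n >= 1;
   - TFree j b : Y is not bound inside, it lies j binders outside, and b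
     records whether a bullet was seen. *)
Inductive tinfo : Type :=
| TBound : bool -> tinfo
| TFree : nat -> bool -> tinfo.

Fixpoint tail_info (T : ty) : tinfo :=
  match T with
  | TVar n => TFree n false
  | TArr _ B => tail_info B
  | TLat T1 => match tail_info T1 with
               | TBound g => TBound g
               | TFree j _ => TFree j true
               end
  | TMu T1 => match tail_info T1 with
              | TBound g => TBound g
              | TFree 0 b => TBound b
              | TFree (S j) b => TFree j b
              end
  end.

Definition top_variant (A : ty) : Prop := tail_info (tail A) = TBound true.

Fixpoint proper (k : nat) (A : ty) : Prop :=
  match A with
  | TVar n => n <> k
  | TLat _ => True
  | TArr A1 A2 => (proper k A1 /\ proper k A2) \/ top_variant A2
  | TMu A1 => proper (S k) A1 \/ top_variant (TMu A1)
  end.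

Inductive wf : ty -> Prop :=
| wf_var : forall n, wf (TVar n)
| wf_arr : forall A B, wf A -> wf B -> wf (TArr A B)
| wf_lat : forall A, wf A -> wf (TLat A)
| wf_mu : forall A, wf A -> proper 0 A -> wf (TMu A).

Inductive eqty (distr : bool) : ty -> ty -> Prop :=
| eq_refl : forall A, wf A -> eqty distr A A
| eq_sym : forall A B, eqty distr A B -> eqty distr B A
| eq_trans : forall A B C, eqty distr A B -> eqty distr B C -> eqty distr A C
| eq_lat : forall A B, eqty distr A B -> eqty distr (TLat A) (TLat B)
| eq_arr : forall A B C D, eqty distr A C -> eqty distr B D ->
    eqty distr (TArr A B) (TArr C D)
| eq_arr_top : forall A, wf A -> eqty distr (TArr A top) top
| eq_unfold : forall A, wf (TMu A) -> wf (subst0 A (TMu A)) ->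
    eqty distr (TMu A) (subst0 A (TMu A))
| eq_contract : forall A C, wf A -> wf (TMu C) -> wf (subst0 C A) ->
    proper 0 C -> eqty distr A (subst0 C A) -> eqty distr A (TMu C)
| eq_distr : forall A B, distr = true -> wf A -> wf B ->
    eqty distr (TLat (TArr A B)) (TArr (TLat A) (TLat B)).

Notation cong := (eqty false).
Notation simeq := (eqty true).

(* Main.v *)
Require Import Defs.
From Stdlib Require Import Arith Lia Bool.

Ltac nc := repeat (simpl in *; match goal with
  | |- context [?a <? ?b] => destruct (Nat.ltb_spec a b)
  | |- context [?a =? ?b] => destruct (Nat.eqb_spec a b)
  end); simpl in *; try (f_equal; lia); try lia.

Lemma shift_0 : forall M c, shift 0 c M = M.
Proof. induction M; intros c; simpl; try rewrite IHM1, IHM2; try rewrite IHM; auto. nc. Qed.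

Lemma shsh2 : forall S d c k e, e <= c -> c <= e + k ->
  shift d c (shift k e S) = shift (d + k) e S.
Proof. induction S; intros d c k e H1 H2; simpl.
  - nc.
  - rewrite IHS1, IHS2; auto.
  - rewrite IHS; auto.
  - rewrite IHS; auto; lia. Qed.

Lemma shsh : forall T d c0 e c c', e <= c -> c' = c0 + c ->
  shift d c' (shift c0 e T) = shift c0 e (shift d c T).
Proof. induction T; intros d c0 e c c' H1 H2; simpl.
  - nc.
  - rewrite (IHT1 d c0 e c c'), (IHT2 d c0 e c c'); auto.
  - rewrite (IHT d c0 e c c'); auto.
  - rewrite (IHT d c0 (S e) (S c) (S c')); auto; lia. Qed.

Lemma subsh_cancel : forall M T c0 c d, c0 <= c -> c <= c0 + d ->
  subst c T (shift (S d) c0 M) = shift d c0 M.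
Proof. induction M; intros T c0 c d H1 H2; simpl.
  - nc.
  - rewrite IHM1, IHM2; auto.
  - rewrite IHM; auto.
  - rewrite IHM; auto; lia. Qed.

Lemma subsh : forall T U k d c kd, c <= k -> kd = k + d ->
  subst kd U (shift d c T) = shift d c (subst k U T).
Proof. induction T; intros U k d c kd H1 H2; subst kd; simpl.
  - nc. rewrite (shsh2 U d c k 0) by lia. f_equal; lia.
  - f_equal; eauto.
  - f_equal; eauto.
  - rewrite (IHT U (S k) d (S c)); auto; lia. Qed.

Lemma subst_subst : forall M U T k c ck, ck = c + k ->
  subst ck U (subst c T M) = subst c (subst k U T) (subst (S ck) U M).
Proof. induction M; intros U T k c ck H; subst ck; simpl.
  - destruct (Nat.ltb_spec n c).
    + nc.
    + destruct (Nat.eqb_spec n c).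
      * subst. nc. apply subsh; lia.
      * nc.
        -- replace n with (S (c+k)) by lia. rewrite subsh_cancel by lia. reflexivity.
  - f_equal; eauto.
  - f_equal; eauto.
  - rewrite (IHM U T k (S c)); auto. Qed.

Lemma shift_subst : forall M T d c0 c c', c' = c0 + c ->
  shift d c' (subst c0 T M) = subst c0 (shift d c T) (shift d (S c') M).
Proof. induction M; intros T d c0 c c' H; subst c'; simpl.
  - destruct (Nat.ltb_spec n c0).
    + nc.
    + destruct (Nat.eqb_spec n c0).
      * subst. nc. apply shsh; lia.
      * nc.
  - f_equal; eauto.
  - f_equal; eauto.
  - rewrite (IHM T d (S c0) c); auto. Qed.

Definition ti (M : ty) := tail_info (tail M).

Lemma ti_var : forall n, ti (TVar n) = TFree n false. Proof. reflexivity. Qed.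
Lemma ti_arr : forall A B, ti (TArr A B) = ti B. Proof. reflexivity. Qed.
Lemma ti_lat : forall A, ti (TLat A) =
  match ti A with TBound g => TBound g | TFree j _ => TFree j true end.
Proof. reflexivity. Qed.
Lemma ti_mu : forall A, ti (TMu A) =
  match ti A with TBound g => TBound g | TFree 0 b => TBound b | TFree (S j) b => TFree j b end.
Proof. reflexivity. Qed.

Definition mapti (f : nat -> nat) (t : tinfo) :=
  match t with TBound g => TBound g | TFree j b => TFree (f j) b end.

Lemma ti_shift : forall M d c, ti (shift d c M) =
  mapti (fun j => if j <? c then j else j + d) (ti M).
Proof. induction M; intros d c.
  - unfold ti; simpl. destruct (n <? c); reflexivity.
  - simpl shift. rewrite !ti_arr; auto.
  - simpl shift. rewrite !ti_lat, IHM. destruct (ti M); reflexivity.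
  - simpl shift. rewrite !ti_mu, IHM. destruct (ti M) as [g|[|j] b]; simpl; auto.
    destruct (Nat.ltb_spec j c); destruct (Nat.ltb_spec (S j) (S c)); simpl; try lia; auto.
Qed.

Definition combine k b (t : tinfo) :=
  match t with TBound g => TBound g | TFree i b' => TFree (i + k) (b || b') end.

Lemma ti_subst : forall M k U, ti (subst k U M) =
  match ti M with
  | TBound g => TBound g
  | TFree j b => if j <? k then TFree j b else if j =? k then combine k b (ti U)
                 else TFree (pred j) b end.
Proof. induction M; intros k U.
  - rewrite ti_var. simpl.
    destruct (Nat.ltb_spec n k); auto. destruct (Nat.eqb_spec n k); auto.
    rewrite ti_shift. destruct (ti U); simpl; auto.
  - simpl subst. rewrite !ti_arr; auto.
  - simpl subst. rewrite !ti_lat, IHM. destruct (ti M) as [g|j b]; auto.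
    destruct (j <? k); auto. destruct (j =? k); auto. destruct (ti U); simpl; auto.
  - simpl subst. rewrite !ti_mu, IHM. destruct (ti M) as [g|[|j] b]; simpl; auto;
    repeat match goal with |- context [?a <? ?b] => destruct (Nat.ltb_spec a b)
      | |- context [?a =? ?b] => destruct (Nat.eqb_spec a b) end; simpl; try lia; auto;
    try (destruct j; simpl; [lia|auto]);
    try (destruct (ti U) as [g|i b']; simpl; auto; replace (i + S k) with (S (i + k)) by lia; auto).
Qed.

Definition tvb (M : ty) : bool := match ti M with TBound true => true | _ => false end.

Lemma tv_tvb : forall M, top_variant M <-> tvb M = true.
Proof. intros M; unfold top_variant, tvb; fold (ti M). destruct (ti M) as [[|]|]; split; intros; congruence. Qed.

Lemma tv_shift : forall M d c, top_variant M -> top_variant (shift d c M).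
Proof. intros M d c H. unfold top_variant in *. fold (ti M) in H. fold (ti (shift d c M)).
  rewrite ti_shift, H. reflexivity. Qed.

Lemma tv_subst : forall M k U, top_variant M -> top_variant (subst k U M).
Proof. intros M k U H. unfold top_variant in *. fold (ti M) in H. fold (ti (subst k U M)).
  rewrite ti_subst, H. reflexivity. Qed.

Lemma proper_shift : forall M p d c, proper p M ->
  proper (if p <? c then p else p + d) (shift d c M).
Proof. induction M; intros p d c H; simpl in *.
  - nc.
  - destruct H as [[H1 H2]|H]; [left; split; auto|right; apply tv_shift; auto].
  - auto.
  - destruct H as [H|H].
    + left. specialize (IHM (S p) d (S c) H). simpl in IHM.
      destruct (Nat.ltb_spec p c); destruct (Nat.ltb_spec (S p) (S c)); auto; lia.
    + right. apply (tv_shift (TMu M) d c H).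
Qed.

Lemma proper_shift_free : forall M p d c, c <= p -> p < c + d -> proper p (shift d c M).
Proof. induction M; intros p d c H1 H2; simpl.
  - nc.
  - left; split; auto.
  - auto.
  - left. apply IHM; lia.
Qed.

Lemma proper_subst : forall M p k U, p < k -> proper p M -> proper p (subst k U M).
Proof. induction M; intros p k U H1 H; simpl in *.
  - nc. apply proper_shift_free; lia.
  - destruct H as [[H2 H3]|H]; [left; split; auto|right; apply tv_subst; auto].
  - auto.
  - destruct H as [H|H].
    + left. apply IHM; auto; lia.
    + right. apply (tv_subst (TMu M) k U H).
Qed.

Lemma wf_shift : forall M d c, wf M -> wf (shift d c M).
Proof. intros M d c H; revert d c; induction H; intros d c; simpl.
  - destruct (n <? c); constructor.
  - constructor; auto.
  - constructor; auto.
  - constructor; auto. pose proof (proper_shift A 0 d (S c) H0). simpl in H1. auto. Qed.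

Lemma wf_subst : forall M k U, wf U -> wf M -> wf (subst k U M).
Proof. intros M k U HU H; revert k; induction H; intros k; simpl.
  - destruct (n <? k); [constructor|]. destruct (n =? k); [apply wf_shift; auto|constructor].
  - constructor; auto.
  - constructor; auto.
  - constructor; auto. apply proper_subst; auto; lia.
Qed.

Lemma wf_top : wf top.
Proof. repeat constructor. Qed.

Lemma wf_inv_mu : forall A, wf (TMu A) -> wf A /\ proper 0 A.
Proof. intros A H; inversion H; auto. Qed.
Lemma wf_inv_arr : forall A B, wf (TArr A B) -> wf A /\ wf B.
Proof. intros A B H; inversion H; auto. Qed.
Lemma wf_inv_lat : forall A, wf (TLat A) -> wf A.
Proof. intros A H; inversion H; auto. Qed.

Lemma eqty_wf : forall d A B, eqty d A B -> wf A /\ wf B.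
Proof. intros d A B H; induction H; intuition; try solve [repeat constructor; auto].
Qed.

Lemma shift_top : forall d c, shift d c top = top. Proof. reflexivity. Qed.
Lemma subst_top : forall k U, subst k U top = top. Proof. reflexivity. Qed.

Lemma subst0_shift : forall A T d c,
  shift d c (subst0 A T) = subst0 (shift d (S c) A) (shift d c T).
Proof. intros. unfold subst0. apply (shift_subst A T d 0 c c). auto. Qed.

Lemma subst0_subst : forall A T k U,
  subst k U (subst0 A T) = subst0 (subst (S k) U A) (subst k U T).
Proof. intros. unfold subst0. apply (subst_subst A U T k 0 k). auto. Qed.

Lemma eqty_shift : forall d A B, eqty d A B -> forall n c, eqty d (shift n c A) (shift n c B).
Proof. intros d A B H; induction H; intros n c.
  - apply eq_refl. apply wf_shift; auto.
  - apply eq_sym; auto.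
  - eapply eq_trans; eauto.
  - simpl; apply eq_lat; auto.
  - simpl; apply eq_arr; auto.
  - simpl. rewrite <- (shift_top n c) at 2. apply eq_arr_top. apply wf_shift; auto.
  - rewrite subst0_shift. apply (eq_unfold d (shift n (S c) A)).
    + apply (wf_shift (TMu A) n c); auto.
    + change (TMu (shift n (S c) A)) with (shift n c (TMu A)).
      rewrite <- subst0_shift. apply wf_shift; auto.
  - change (shift n c (TMu C)) with (TMu (shift n (S c) C)). apply eq_contract.
    + apply wf_shift; auto.
    + apply (wf_shift (TMu C) n c); auto.
    + replace (shift n c A) with (shift n c A) by reflexivity.
      change (subst0 (shift n (S c) C) (shift n c A)) with (subst0 (shift n (S c) C) (shift n c A)).
      rewrite <- subst0_shift. apply wf_shift; auto.
    + pose proof (proper_shift C 0 n (S c) H2) as Hp. simpl in Hp; auto.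
    + rewrite <- subst0_shift. auto.
  - simpl. apply eq_distr; auto; apply wf_shift; auto.
Qed.

Lemma eqty_subst : forall d A B, eqty d A B -> forall k U, wf U ->
  eqty d (subst k U A) (subst k U B).
Proof. intros d A B H; induction H; intros k U HU.
  - apply eq_refl. apply wf_subst; auto.
  - apply eq_sym; auto.
  - eapply eq_trans; eauto.
  - simpl; apply eq_lat; auto.
  - simpl; apply eq_arr; auto.
  - simpl. rewrite <- (subst_top k U) at 2. apply eq_arr_top. apply wf_subst; auto.
  - rewrite subst0_subst. apply (eq_unfold d (subst (S k) U A)).
    + apply (wf_subst (TMu A) k U); auto.
    + change (TMu (subst (S k) U A)) with (subst k U (TMu A)).
      rewrite <- subst0_subst. apply wf_subst; auto.
  - change (subst k U (TMu C)) with (TMu (subst (S k) U C)). apply eq_contract.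
    + apply wf_subst; auto.
    + apply (wf_subst (TMu C) k U); auto.
    + rewrite <- subst0_subst. apply wf_subst; auto.
    + apply proper_subst; auto; lia.
    + rewrite <- subst0_subst. auto.
  - simpl. apply eq_distr; auto; apply wf_subst; auto.
Qed.

Lemma mu_cong : forall d C1 C2, wf (TMu C1) -> wf (TMu C2) -> eqty d C1 C2 ->
  eqty d (TMu C1) (TMu C2).
Proof. intros d C1 C2 H1 H2 H. pose proof H2 as H3. apply wf_inv_mu in H3 as [H3 P2].
  apply eq_contract; auto.
  - apply wf_subst; auto.
  - eapply eq_trans. apply eq_unfold; auto. apply wf_subst; auto. apply wf_inv_mu in H1; tauto.
    apply eqty_subst; auto.
Qed.

Lemma cong_subst : forall M, wf M -> forall d k X Y, eqty d X Y ->
  eqty d (subst k X M) (subst k Y M).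
Proof. intros M HM; induction HM; intros d k X Y HXY; pose proof (eqty_wf _ _ _ HXY) as [HX HY]; simpl.
  - destruct (n <? k). apply eq_refl; constructor. destruct (n =? k).
    apply eqty_shift; auto. apply eq_refl; constructor.
  - apply eq_arr; auto.
  - apply eq_lat; auto.
  - apply mu_cong; auto.
    + apply (wf_subst (TMu A) k X); auto; constructor; auto.
    + apply (wf_subst (TMu A) k Y); auto; constructor; auto.
Qed.

Lemma top_unfold : forall d, eqty d top (TLat top).
Proof. intros d. apply (eq_unfold d (TLat (TVar 0))). apply wf_top. simpl. repeat constructor. Qed.

Lemma top_lat : forall d A, eqty d A top -> eqty d (TLat A) top.
Proof. intros d A H. eapply eq_trans. apply eq_lat; eauto. apply eq_sym, top_unfold. Qed.

Lemma top_arr : forall d A B, wf A -> eqty d B top -> eqty d (TArr A B) top.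
Proof. intros d A B HA H. eapply eq_trans. apply eq_arr. apply eq_refl; auto. eauto.
  apply eq_arr_top; auto. Qed.

Lemma mu_top : forall d C, wf (TMu C) -> eqty d (subst 0 top C) top -> eqty d (TMu C) top.
Proof. intros d C H1 H. pose proof H1 as H2. apply wf_inv_mu in H2 as [H2 P].
  apply eq_sym, eq_contract; auto. apply wf_top. apply wf_subst; auto; apply wf_top.
  apply eq_sym; auto. Qed.

Lemma subst_var_eq : forall j U, subst j U (TVar j) = shift j 0 U.
Proof. intros. simpl. rewrite Nat.ltb_irrefl, Nat.eqb_refl. auto. Qed.

Lemma TVT : forall M, wf M -> forall d,
  (ti M = TBound true -> eqty d M top) /\
  (forall j b, ti M = TFree j b -> eqty d (subst j top M) top).
Proof. intros M HM; induction HM; intros d; split.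
  - rewrite ti_var; discriminate.
  - intros j b H. rewrite ti_var in H. inversion H; subst. rewrite subst_var_eq.
    apply eq_refl, wf_top.
  - rewrite ti_arr. intros H. apply top_arr; auto. apply IHHM2; auto.
  - rewrite ti_arr. intros j b H. simpl. apply top_arr. apply wf_subst; auto; apply wf_top.
    eapply IHHM2; eauto.
  - rewrite ti_lat. intros H. apply top_lat. destruct (ti A) eqn:E; try discriminate.
    inversion H; subst. apply IHHM; auto.
  - rewrite ti_lat. intros j b H. simpl. apply top_lat. destruct (ti A) eqn:E; try discriminate.
    inversion H; subst. eapply IHHM; eauto.
  - rewrite ti_mu. intros Ht. apply mu_top. constructor; auto.
    destruct (ti A) as [g|[|j] b] eqn:E; try discriminate.
    + inversion Ht; subst. replace top with (subst 0 top top) by reflexivity.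
      apply eqty_subst. apply IHHM; auto. apply wf_top.
    + eapply IHHM; eauto.
  - rewrite ti_mu. intros j b Ht. simpl. apply mu_top.
    + apply (wf_subst (TMu A) j top). apply wf_top. constructor; auto.
    + destruct (ti A) as [g|[|j'] b'] eqn:E; try discriminate.
      inversion Ht; subst.
      replace top with (subst 0 top top) by reflexivity.
      apply eqty_subst. 2: apply wf_top. eapply IHHM; eauto.
Qed.

Lemma TVT' : forall d M, wf M -> top_variant M -> eqty d M top.
Proof. intros d M HM H. apply (TVT M HM d). exact H. Qed.

Inductive tree := St | Vr (k : nat) | Ar (a b : tree) | Lt (t : tree).
Definition tree_eq_dec : forall a b : tree, {a = b} + {a <> b}.
Proof. decide equality. apply Nat.eq_dec. Defined.

Fixpoint topn n := match n with 0 => St | S m => Lt (topn m) end.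
Definition arr n a b := if tree_eq_dec b (topn n) then b else Ar a b.
Fixpoint latD t := match t with Ar a b => Ar (latD a) (latD b) | _ => Lt t end.
Definition lat (d : bool) t := if d then latD t else Lt t.
Fixpoint trunc n t := match t with
  | St => St | Vr k => Vr k
  | Ar a b => arr n (trunc n a) (trunc n b)
  | Lt t' => match n with 0 => St | S m => Lt (trunc m t') end end.
Definition scons (t : tree) (s : nat -> tree) : nat -> tree :=
  fun k => match k with 0 => t | S k' => s k' end.

Fixpoint I (d : bool) (n : nat) (s : nat -> tree) (M : ty) {struct M} : tree :=
  match M with
  | TVar k => trunc n (s k)
  | TArr A B => arr n (I d n s A) (I d n s B)
  | TLat A => match n with 0 => St | S m => lat d (I d m s A) end
  | TMu A => Nat.iter (S n) (fun t => I d n (scons t s) A) St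
  end.

Lemma topn_not_ar : forall n a b, topn n <> Ar a b.
Proof. destruct n; simpl; discriminate. Qed.
Lemma topn_inj : forall n m, topn n = topn m -> n = m.
Proof. induction n; destruct m; simpl; intros H; try discriminate; auto.
  inversion H; f_equal; auto. Qed.

Lemma arr_cases : forall n a b, (b = topn n /\ arr n a b = b) \/ (b <> topn n /\ arr n a b = Ar a b).
Proof. intros; unfold arr; destruct (tree_eq_dec b (topn n)); auto. Qed.

Lemma arr_top : forall n a, arr n a (topn n) = topn n.
Proof. intros; unfold arr; destruct (tree_eq_dec (topn n) (topn n)); congruence. Qed.

Lemma trunc_topn : forall n k, k <= n -> trunc k (topn n) = topn k.
Proof. induction n; intros k H; destruct k; simpl; auto; try lia. f_equal; apply IHn; lia. Qed.

Lemma trunc_arr : forall n k a b, k <= n -> trunc k (arr n a b) = arr k (trunc k a) (trunc k b).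
Proof. intros n k a b H. destruct (arr_cases n a b) as [[E1 E2]|[E1 E2]]; rewrite E2.
  - subst b. rewrite trunc_topn by auto. rewrite arr_top. auto.
  - reflexivity. Qed.

Lemma trunc_trunc : forall t n j, j <= n -> trunc j (trunc n t) = trunc j t.
Proof. induction t; intros n j H; simpl; auto.
  - rewrite trunc_arr by auto. rewrite (IHt1 n j), (IHt2 n j); auto.
  - destruct n; destruct j; simpl; auto; try lia. f_equal. apply IHt; lia. Qed.

Lemma trunc_idem : forall t n, trunc n (trunc n t) = trunc n t.
Proof. intros; apply trunc_trunc; auto. Qed.

Lemma latD_not_ar_lt : forall t x, latD t = Lt x -> t = x.
Proof. destruct t; simpl; intros x H; inversion H; auto. Qed.

Lemma lat_topn : forall d m, lat d (topn m) = topn (S m).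
Proof. intros [|] m; unfold lat; simpl; auto. destruct m; reflexivity. Qed.

Lemma lat_eq_topn : forall d m t, lat d t = topn (S m) -> t = topn m.
Proof. intros [|] m t H; unfold lat in H; simpl in H.
  - apply latD_not_ar_lt in H; auto.
  - inversion H; auto. Qed.

Lemma latD_arr : forall m a b, latD (arr m a b) = arr (S m) (latD a) (latD b).
Proof. intros m a b. destruct (arr_cases m a b) as [[E1 E2]|[E1 E2]]; rewrite E2.
  - subst b. replace (latD (topn m)) with (topn (S m)) by (destruct m; reflexivity).
    rewrite arr_top; auto.
  - simpl. unfold arr. destruct (tree_eq_dec (latD b) (topn (S m))) as [E|E]; auto.
    exfalso. simpl in E. apply E1. apply latD_not_ar_lt in E. auto. Qed.

Lemma trunc0_latD : forall t, trunc 0 (latD t) = St.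
Proof. induction t; simpl; auto. rewrite IHt1, IHt2. reflexivity. Qed.

Lemma trunc_latD : forall t m, trunc (S m) (latD t) = latD (trunc m t).
Proof. induction t; intros m; simpl; auto.
  - rewrite IHt1, IHt2. symmetry. apply latD_arr.
  - destruct m; reflexivity. Qed.

Lemma trunc_lat : forall d t m, trunc (S m) (lat d t) = lat d (trunc m t).
Proof. intros [|] t m; unfold lat; simpl; auto. apply trunc_latD. Qed.
Lemma trunc0_lat : forall d t, trunc 0 (lat d t) = St.
Proof. intros [|] t; unfold lat; simpl; auto. apply trunc0_latD. Qed.

Lemma iter_S : forall (F : tree -> tree) n x, Nat.iter (S n) F x = F (Nat.iter n F x).
Proof. reflexivity. Qed.

Lemma I_norm : forall d M lv s, trunc lv (I d lv s M) = I d lv s M.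
Proof. intros d M; induction M; intros lv s; simpl.
  - apply trunc_idem.
  - rewrite trunc_arr by auto. rewrite IHM1, IHM2; auto.
  - destruct lv; auto. rewrite trunc_lat, IHM; auto.
  - apply IHM. Qed.

Lemma iter_ext : forall (F G : tree -> tree) n x, (forall t, F t = G t) -> Nat.iter n F x = Nat.iter n G x.
Proof. induction n; intros x H; simpl; auto. rewrite IHn, H; auto. Qed.

Lemma I_ext : forall d M lv s s', (forall x, trunc lv (s x) = trunc lv (s' x)) -> I d lv s M = I d lv s' M.
Proof. intros d M; induction M; intros lv s s' H; simpl; auto.
  - rewrite (IHM1 lv s s'), (IHM2 lv s s'); auto.
  - destruct lv; auto. rewrite (IHM lv s s'); auto. intros x.
    rewrite <- (trunc_trunc (s x) (S lv)), <- (trunc_trunc (s' x) (S lv)) by lia. rewrite H; auto.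
  - assert (Hf : forall t, I d lv (scons t s) M = I d lv (scons t s') M).
    { intros t; apply IHM; intros [|x]; simpl; auto. }
    rewrite (iter_ext _ _ lv St Hf). apply Hf. Qed.

Definition eqlev n a b := match n with 0 => True | S m => trunc m a = trunc m b end.

Lemma fix_uniq : forall (F : tree -> tree) n,
  (forall i t t', i <= n -> eqlev i t t' -> trunc i (F t) = trunc i (F t')) ->
  forall x y, x = F x -> y = F y -> trunc n x = x -> trunc n y = y -> x = y.
Proof. intros F n HF x y Hx Hy Nx Ny.
  assert (forall i, i <= n -> trunc i x = trunc i y).
  { induction i; intros Hi.
    - rewrite Hx, Hy. apply HF; simpl; auto.
    - rewrite Hx, Hy. apply HF; auto. simpl. apply IHi; lia. }
  rewrite <- Nx, <- Ny. apply H; auto. Qed.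

Lemma fix_conv : forall (F : tree -> tree) n,
  (forall i t t', i <= n -> eqlev i t t' -> trunc i (F t) = trunc i (F t')) ->
  (forall t, trunc n (F t) = F t) ->
  F (Nat.iter (S n) F St) = Nat.iter (S n) F St.
Proof. intros F n HF HN.
  assert (P : forall i, i <= n -> forall j, i <= j ->
    trunc i (Nat.iter (S j) F St) = trunc i (Nat.iter (S (S j)) F St)).
  { induction i; intros Hi j Hj.
    - rewrite !iter_S. apply HF; simpl; auto.
    - destruct j as [|j]; [lia|]. rewrite (iter_S F (S j)), (iter_S F (S (S j))).
      apply HF; auto. simpl. apply IHi; lia. }
  specialize (P n (le_n n) n (le_n n)).
  change (Nat.iter (S (S n)) F St) with (F (Nat.iter (S n) F St)) in P.
  change (Nat.iter (S n) F St) with (F (Nat.iter n F St)) in P at 1.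
  rewrite !HN in P. symmetry. exact P. Qed.

Definition tcond (b : bool) (n : nat) (a : tree) : Prop := if b then eqlev n a (topn n) else trunc n a = topn n.

Definition TVs d M := (ti M = TBound true -> forall n s, I d n s M = topn n) /\
  (forall j b, ti M = TFree j b -> forall n s, tcond b n (s j) -> I d n s M = topn n).
Definition Guard d M := forall j n s s', proper j M ->
  (forall x, x <> j -> trunc n (s x) = trunc n (s' x)) -> eqlev n (s j) (s' j) ->
  I d n s M = I d n s' M.
Definition TC d M := forall k n s, k <= n -> trunc k (I d n s M) = I d k s M.

Definition Fm d n s C := fun t => I d n (scons t s) C.
Lemma I_mu : forall d n s C, I d n s (TMu C) = Nat.iter (S n) (Fm d n s C) St.
Proof. reflexivity. Qed.

Lemma mu_contr : forall d C, Guard d C -> TC d C -> proper 0 C -> forall n s,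
  forall i t t', i <= n -> eqlev i t t' -> trunc i (Fm d n s C t) = trunc i (Fm d n s C t').
Proof. intros d C HG HT HP n s i t t' Hi He. unfold Fm. rewrite !HT by auto.
  apply (HG 0); auto. intros [|x] Hx; simpl; auto. congruence. Qed.

Lemma mu_fix : forall d C, Guard d C -> TC d C -> proper 0 C -> forall n s,
  Fm d n s C (I d n s (TMu C)) = I d n s (TMu C).
Proof. intros. rewrite I_mu. apply fix_conv. apply mu_contr; auto.
  intros t; apply I_norm. Qed.

Lemma mu_uniq : forall d C, Guard d C -> TC d C -> proper 0 C -> forall n s x,
  x = Fm d n s C x -> x = I d n s (TMu C).
Proof. intros. apply (fix_uniq (Fm d n s C) n).
  - apply mu_contr; auto.
  - auto.
  - symmetry; apply mu_fix; auto.
  - rewrite H2. apply I_norm.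
  - apply I_norm. Qed.

Lemma eqlev_refl : forall n a, eqlev n a a.
Proof. destruct n; simpl; auto. Qed.

Lemma tcond_lat : forall b m a, tcond true (S m) a -> tcond b m a.
Proof. intros b m a H. change (trunc m a = trunc m (topn (S m))) in H.
  rewrite trunc_topn in H by lia. destruct b; unfold tcond; auto.
  destruct m as [|m']; [exact Logic.I|]. change (trunc m' a = trunc m' (topn (S m'))).
  rewrite <- (trunc_trunc a (S m')), H by lia. rewrite !trunc_topn by lia. reflexivity. Qed.

Lemma eqlev_trunc : forall k t, eqlev k (trunc k t) t.
Proof. destruct k; simpl; auto. intros; apply trunc_trunc; auto. Qed.

Lemma combined : forall M, wf M -> forall d, TVs d M /\ Guard d M /\ TC d M.
Proof. intros M HM; induction HM; intros d.
  - split; [|split].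
    + split. rewrite ti_var; discriminate.
      intros j b H lv s Hc. rewrite ti_var in H. inversion H; subst. simpl in Hc. simpl. auto.
    + intros j lv s s' Hp Ho He. simpl in Hp. simpl. apply Ho; auto.
    + intros k lv s Hk. simpl. apply trunc_trunc; auto.
  - destruct (IHHM1 d) as [[TA1 TA2] [GA CA]]. destruct (IHHM2 d) as [[TB1 TB2] [GB CB]].
    split; [|split].
    + split; rewrite ti_arr.
      * intros H lv s. simpl. rewrite (TB1 H). apply arr_top.
      * intros j b H lv s Hc. simpl. rewrite (TB2 j b H lv s Hc). apply arr_top.
    + intros j lv s s' Hp Ho He. simpl in Hp. simpl. destruct Hp as [[P1 P2]|P].
      * rewrite (GA j lv s s'), (GB j lv s s'); auto.
      * unfold top_variant in P. fold (ti B) in P. rewrite !(TB1 P). rewrite !arr_top. auto.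
    + intros k lv s Hk. simpl. rewrite trunc_arr by auto. rewrite CA, CB; auto.
  - destruct (IHHM d) as [[TA1 TA2] [GA CA]]. split; [|split].
    + split; rewrite ti_lat.
      * intros H lv s. destruct (ti A) as [g|j b] eqn:E; try discriminate. inversion H; subst.
        destruct lv; simpl; auto. rewrite TA1; auto. apply lat_topn.
      * intros j b H lv s Hc. destruct (ti A) as [g|j' b'] eqn:E; try discriminate.
        inversion H; subst. destruct lv; simpl; auto. rewrite (TA2 j b' Logic.eq_refl lv s).
        apply lat_topn. apply tcond_lat; auto.
    + intros j lv s s' Hp Ho He. destruct lv; simpl; auto. f_equal. apply I_ext.
      intros x. destruct (Nat.eq_dec x j).
      * subst. simpl in He. auto.
      * rewrite <- (trunc_trunc (s x) (S lv)), <- (trunc_trunc (s' x) (S lv)) by lia.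
        rewrite Ho; auto.
    + intros k lv s Hk. destruct lv; destruct k; simpl; auto; try lia.
      * apply trunc0_lat.
      * rewrite trunc_lat, CA; auto; lia.
  - destruct (IHHM d) as [[TA1 TA2] [GA CA]].
    assert (TV : TVs d (TMu A)).
    { split; rewrite ti_mu.
      * intros Ht lv s. destruct (ti A) as [g|[|j] b] eqn:E; try discriminate.
        -- inversion Ht; subst. rewrite I_mu. change (Nat.iter (S lv) (Fm d lv s A) St) with
             (Fm d lv s A (Nat.iter lv (Fm d lv s A) St)). unfold Fm. apply TA1; auto.
        -- inversion Ht; subst. symmetry. apply mu_uniq; auto.
           unfold Fm. symmetry. apply (TA2 0 true Logic.eq_refl). simpl. apply eqlev_refl.
      * intros j b Ht lv s Hc. destruct (ti A) as [g|[|j'] b'] eqn:E; try discriminate.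
        inversion Ht; subst. rewrite I_mu. change (Nat.iter (S lv) (Fm d lv s A) St) with
             (Fm d lv s A (Nat.iter lv (Fm d lv s A) St)). unfold Fm.
        apply (TA2 (S j) b Logic.eq_refl). simpl. auto. }
    split; [auto|split].
    + intros j lv s s' Hp Ho He. simpl in Hp. destruct Hp as [P|P].
      * rewrite !I_mu. apply iter_ext. intros t. unfold Fm. apply (GA (S j)); auto.
        intros [|x] Hx; simpl; auto; apply Ho; lia.
      * unfold top_variant in P. fold (ti (TMu A)) in P. destruct TV as [TV1 _].
        rewrite !TV1; auto.
    + intros k lv s Hk. apply mu_uniq; auto.
      unfold Fm. rewrite (GA 0 k (scons (trunc k (I d lv s (TMu A))) s) (scons (I d lv s (TMu A)) s)); auto.
      * rewrite <- (CA k lv) by auto. change (I d lv (scons (I d lv s (TMu A)) s) A) with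
          (Fm d lv s A (I d lv s (TMu A))). rewrite mu_fix; auto.
      * intros [|x] Hx; simpl; auto. lia.
      * simpl. apply eqlev_trunc.
Qed.

Lemma I_ext_eq : forall d M lv s s', (forall x, s x = s' x) -> I d lv s M = I d lv s' M.
Proof. intros. apply I_ext. intros; rewrite H; auto. Qed.

Definition shs k c (s : nat -> tree) x := if x <? c then s x else s (x + k).
Lemma I_shift : forall d M k c lv s, I d lv s (shift k c M) = I d lv (shs k c s) M.
Proof. intros d M; induction M; intros k c lv s; simpl.
  - unfold shs. destruct (n <? c); reflexivity.
  - rewrite IHM1, IHM2; auto.
  - destruct lv; auto. rewrite IHM; auto.
  - assert (Hf : forall t, I d lv (scons t s) (shift k (S c) M) = I d lv (scons t (shs k c s)) M).
    { intros t. rewrite IHM. apply I_ext_eq. intros [|x]; unfold shs; simpl; auto.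
      all: try (destruct (Nat.ltb_spec x c); destruct (Nat.ltb_spec (S x) (S c)); simpl; auto; lia). }
    rewrite (iter_ext _ _ lv St Hf). apply Hf. Qed.

Definition ins c (v : tree) (s : nat -> tree) x :=
  if x <? c then s x else if x =? c then v else s (pred x).
Definition drop c (s : nat -> tree) x := s (x + c).

Lemma I_subst : forall d M c U s m n, wf U -> m <= n ->
  I d m s (subst c U M) = I d m (ins c (I d n (drop c s) U) s) M.
Proof. intros d M; induction M; intros c U s m lv HU Hm; simpl.
  - unfold ins. destruct (n <? c); simpl; auto. destruct (Nat.eqb_spec n c); simpl; auto.
    subst. rewrite I_shift. destruct (combined U HU d) as [_ [_ TCU]].
    rewrite <- (TCU m lv) by auto. f_equal; try apply I_ext_eq; intros x; unfold shs, drop; simpl; auto.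
  - rewrite (IHM1 c U s m lv), (IHM2 c U s m lv); auto.
  - destruct m; auto. rewrite (IHM c U s m lv); auto; lia.
  - assert (Hf : forall t, I d m (scons t s) (subst (S c) U M) =
       I d m (scons t (ins c (I d lv (drop c s) U) s)) M).
    { intros t. rewrite (IHM (S c) U (scons t s) m lv) by auto. apply I_ext_eq.
      intros [|x]; unfold ins; simpl.
      - reflexivity.
      - destruct (Nat.ltb_spec x c); destruct (Nat.ltb_spec (S x) (S c)); try lia; simpl; auto.
        destruct (Nat.eqb_spec x c); destruct (Nat.eqb_spec (S x) (S c)); try lia; simpl; auto.
        + apply I_ext_eq. intros y; unfold drop; simpl. replace (y + S c) with (S (y + c)) by lia. reflexivity.
        + destruct x; [lia|]. reflexivity. }
    rewrite (iter_ext _ _ m St Hf). apply Hf. Qed.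

Lemma I_subst0 : forall d A U s n, wf U ->
  I d n s (subst0 A U) = I d n (scons (I d n s U) s) A.
Proof. intros. unfold subst0. rewrite (I_subst d A 0 U s n n) by auto. apply I_ext_eq.
  intros [|x]; unfold ins, drop; simpl; auto. apply I_ext_eq. intros; f_equal; lia. Qed.

Lemma I_top : forall d n s, I d n s top = topn n.
Proof. intros. destruct (combined top wf_top d) as [[T1 _] _]. apply T1. reflexivity. Qed.

Lemma sound : forall d M N, eqty d M N -> forall n s, I d n s M = I d n s N.
Proof. intros d M N H; induction H; intros lv s.
  - auto.
  - auto.
  - rewrite IHeqty1; auto.
  - destruct lv; simpl; auto. rewrite IHeqty; auto.
  - simpl. rewrite IHeqty1, IHeqty2; auto.
  - change (arr lv (I d lv s A) (I d lv s top) = I d lv s top). rewrite I_top. apply arr_top.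
  - rewrite I_subst0 by auto. pose proof H as H'. apply wf_inv_mu in H' as [HA HP].
    destruct (combined A HA d) as [_ [GA CA]]. symmetry. apply (mu_fix d A); auto.
  - apply wf_inv_mu in H0 as [HC HP]. destruct (combined C HC d) as [_ [GC CC]].
    apply mu_uniq; auto. unfold Fm. rewrite <- I_subst0 by auto. auto.
  - subst. destruct lv; simpl; auto. unfold lat. apply latD_arr.
Qed.

Fixpoint tbul M := match M with TArr _ B => tbul B | TLat A => S (tbul A) | TMu A => tbul A | TVar _ => 0 end.

Lemma NT : forall d M, wf M -> forall j b, ti M = TFree j b -> forall N s,
  (forall k, N <= k -> trunc k (s j) <> topn k) -> forall n, N + tbul M <= n -> I d n s M <> topn n.
Proof. intros d M HM; induction HM; intros j b Ht N s Hs lv Hl.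
  - rewrite ti_var in Ht. inversion Ht; subst. simpl. apply Hs. simpl in Hl; lia.
  - rewrite ti_arr in Ht. simpl. intros E. destruct (arr_cases lv (I d lv s A) (I d lv s B)) as [[E1 E2]|[E1 E2]].
    + eapply IHHM2; eauto.
    + rewrite E2 in E. symmetry in E. eapply topn_not_ar; eauto.
  - rewrite ti_lat in Ht. destruct (ti A) as [g|j' b'] eqn:E; try discriminate. inversion Ht; subst.
    simpl in Hl. destruct lv as [|m]; [lia|]. simpl. intros E2. apply lat_eq_topn in E2.
    eapply (IHHM j b' Logic.eq_refl N s Hs m); [lia | exact E2].
  - rewrite ti_mu in Ht. destruct (ti A) as [g|[|j'] b'] eqn:E; try discriminate. inversion Ht; subst.
    destruct (combined A HM d) as [_ [GA CA]]. rewrite <- mu_fix by auto. unfold Fm.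
    eapply IHHM; eauto.
Qed.

Lemma proper_free_false : forall D k, ti D = TFree k false -> ~ proper k D.
Proof. induction D; intros k Ht Hp; simpl in Hp.
  - rewrite ti_var in Ht; inversion Ht; auto.
  - rewrite ti_arr in Ht. destruct Hp as [[_ P]|P].
    + eapply IHD2; eauto.
    + unfold top_variant in P; fold (ti D2) in P. congruence.
  - rewrite ti_lat in Ht. destruct (ti D); discriminate.
  - rewrite ti_mu in Ht. destruct (ti D) as [g|[|j] b] eqn:E; try discriminate.
    inversion Ht; subst. destruct Hp as [P|P].
    + eapply IHD; eauto.
    + unfold top_variant in P; fold (ti (TMu D)) in P. rewrite ti_mu, E in P. discriminate.
Qed.

Lemma wf_not_bf : forall M, wf M -> ti M <> TBound false.
Proof. intros M HM; induction HM.
  - rewrite ti_var; discriminate.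
  - rewrite ti_arr; auto.
  - rewrite ti_lat. destruct (ti A); congruence.
  - rewrite ti_mu. destruct (ti A) as [g|[|j] b] eqn:E; try discriminate; auto.
    destruct b; try discriminate. intros _. eapply proper_free_false; eauto.
Qed.

Definition Venv : nat -> tree := fun x => Vr x.

Lemma sem_to_tv : forall d M, wf M -> (forall n, I d n Venv M = topn n) -> top_variant M.
Proof. intros d M HM H. unfold top_variant; fold (ti M).
  destruct (ti M) as [[|]|j b] eqn:E; auto.
  - exfalso; eapply wf_not_bf; eauto.
  - exfalso. eapply (NT d M HM j b E 0 Venv); [| apply le_n | apply H].
    intros k _. unfold Venv. simpl. destruct k; discriminate.
Qed.

Lemma tv_to_sem : forall d M, wf M -> top_variant M -> forall n s, I d n s M = topn n.
Proof. intros d M HM H. destruct (combined M HM d) as [[T1 _] _]. apply T1. exact H. Qed.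

Lemma part1 : forall A B C, wf A -> wf B -> wf C ->
  cong (TLat A) (TArr B C) -> cong A C /\ cong C top.
Proof. intros A B C HA HB HC H.
  assert (E : forall n, I false (S n) Venv (TLat A) = I false (S n) Venv (TArr B C))
    by (intros; apply sound; auto).
  assert (HC1 : forall n, I false (S n) Venv C = topn (S n)).
  { intros n. specialize (E n). simpl in E. unfold lat in E.
    destruct (arr_cases (S n) (I false (S n) Venv B) (I false (S n) Venv C)) as [[E1 E2]|[E1 E2]].
    - auto.
    - rewrite E2 in E. discriminate. }
  assert (HC' : forall n, I false n Venv C = topn n).
  { intros n. destruct (combined C HC false) as [_ [_ TCC]]. rewrite <- (TCC n (S n)) by lia.
    rewrite HC1. apply trunc_topn; lia. }
  assert (HA' : forall n, I false n Venv A = topn n).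
  { intros n. specialize (E n). simpl in E. rewrite HC1, arr_top in E. inversion E; auto. }
  apply sem_to_tv in HC'; auto. apply sem_to_tv in HA'; auto.
  split.
  - eapply eq_trans. apply TVT'; eauto. apply eq_sym, TVT'; eauto.
  - apply TVT'; auto.
Qed.

Fixpoint HV (M : ty) (j : nat) : Prop := tvb M = false /\
  match M with TVar x => x = j | TLat _ => False | TArr A B => HV A j \/ HV B j
  | TMu C => HV C (S j) end.
Definition G M := forall j, ~ HV M j.

Fixpoint u (M : ty) : ty := if tvb M then top else
  match M with TVar x => TVar x | TLat A => A | TArr A B => TArr (u A) (u B)
  | TMu C => subst0 (u C) (TMu C) end.

Lemma u_eq : forall M, u M = if tvb M then top else
  match M with TVar x => TVar x | TLat A => A | TArr A B => TArr (u A) (u B)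
  | TMu C => subst0 (u C) (TMu C) end.
Proof. destruct M; reflexivity. Qed.

Lemma tvb_arr : forall A B, tvb (TArr A B) = tvb B. Proof. reflexivity. Qed.
Lemma tvb_lat : forall A, tvb (TLat A) = tvb A.
Proof. intros; unfold tvb; rewrite ti_lat; destruct (ti A); auto. Qed.
Lemma tvb_var : forall x, tvb (TVar x) = false. Proof. reflexivity. Qed.

Lemma tv_true : forall M, tvb M = true -> top_variant M.
Proof. intros; apply tv_tvb; auto. Qed.

Lemma proper_noHV : forall M j, proper j M -> ~ HV M j.
Proof. induction M; intros j Hp Hh; simpl in Hp, Hh.
  - tauto.
  - destruct Hh as [T [H1|H2]]; destruct Hp as [[P1 P2]|P].
    + eapply IHM1; eauto.
    + apply tv_tvb in P. rewrite tvb_arr in T. congruence.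
    + eapply IHM2; eauto.
    + apply tv_tvb in P. rewrite tvb_arr in T. congruence.
  - tauto.
  - destruct Hh as [T H]; destruct Hp as [P|P].
    + eapply IHM; eauto.
    + apply tv_tvb in P. congruence.
Qed.

Lemma wf_u : forall M, wf M -> wf (u M).
Proof. intros M HM; induction HM; rewrite u_eq; destruct (tvb _); try apply wf_top.
  - constructor.
  - constructor; auto.
  - auto.
  - apply wf_subst; auto. constructor; auto.
Qed.

Lemma ti_free : forall U, wf U -> tvb U = false -> exists i b, ti U = TFree i b.
Proof. intros U HU T. unfold tvb in T. pose proof (wf_not_bf U HU).
  destruct (ti U) as [[|]|i b]; try discriminate; try congruence. eauto. Qed.

Lemma tvb_subst : forall M k U, wf U -> tvb U = false -> tvb (subst k U M) = tvb M.
Proof. intros M k U HU T. destruct (ti_free U HU T) as [i [b' E]].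
  unfold tvb. rewrite ti_subst. destruct (ti M) as [g|j b]; auto.
  destruct (j <? k); auto. destruct (j =? k); auto. rewrite E. reflexivity. Qed.

Lemma u_subst : forall M k U, wf U -> tvb U = false -> ~ HV M k ->
  subst k U (u M) = u (subst k U M).
Proof. induction M; intros k U HU T Hh; rewrite (u_eq (subst k U _)), (tvb_subst _ k U HU T), u_eq;
  try (match goal with |- context [tvb ?X] => destruct (tvb X) eqn:Tm end); auto.
  - simpl. assert (n <> k) by (intros E; apply Hh; simpl; auto).
    destruct (Nat.ltb_spec n k); simpl; auto. destruct (Nat.eqb_spec n k); simpl; auto; try lia.
  - simpl. rewrite IHM1, IHM2; auto; intros Hx; apply Hh; simpl; auto.
  - simpl subst at 2. rewrite subst0_subst. rewrite IHM; auto.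
    intros Hx; apply Hh; simpl; auto.
Qed.

Lemma u_lat : forall d X, wf X -> eqty d (u (TLat X)) X.
Proof. intros d X HX. rewrite u_eq, tvb_lat. destruct (tvb X) eqn:T.
  - apply eq_sym, TVT'; auto. apply tv_tvb; auto.
  - apply eq_refl; auto. Qed.

Lemma G_arr : forall A B, G (TArr A B) -> tvb B = false -> G A /\ G B.
Proof. intros A B H T; split; intros j Hj; apply (H j); simpl; rewrite tvb_arr; auto. Qed.

Lemma G_mu : forall C, G (TMu C) -> proper 0 C -> tvb (TMu C) = false -> G C.
Proof. intros C H P T [|j] Hj.
  - eapply proper_noHV; eauto.
  - apply (H j). simpl. auto. Qed.

Lemma L1 : forall M, wf M -> G M -> simeq (TLat (u M)) M.
Proof. intros M HM; induction HM; intros Hg; rewrite u_eq; destruct (tvb _) eqn:T.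
  - eapply eq_trans. apply eq_sym, top_unfold. apply eq_sym, TVT'; [constructor|apply tv_tvb; auto].
  - exfalso. apply (Hg n). simpl. auto.
  - eapply eq_trans. apply eq_sym, top_unfold. apply eq_sym, TVT'; [constructor; auto|apply tv_tvb; auto].
  - rewrite tvb_arr in T. destruct (G_arr A B Hg T). eapply eq_trans.
    apply eq_distr; auto; apply wf_u; auto. apply eq_arr; auto.
  - eapply eq_trans. apply eq_sym, top_unfold. apply eq_sym, TVT'; [constructor; auto|apply tv_tvb; auto].
  - apply eq_refl. constructor; auto.
  - eapply eq_trans. apply eq_sym, top_unfold. apply eq_sym, TVT'; [constructor; auto|apply tv_tvb; auto].
  - assert (GC : G A) by (apply G_mu; auto).
    assert (Hs := eqty_subst true _ _ (IHHM GC) 0 (TMu A) ltac:(constructor; auto)).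
    eapply eq_trans. exact Hs. apply eq_sym, eq_unfold. constructor; auto.
    apply wf_subst; auto. constructor; auto.
Qed.

Lemma tvb_eq : forall d M N, eqty d M N -> tvb M = tvb N.
Proof. intros d M N H. destruct (eqty_wf _ _ _ H) as [HM HN].
  assert (Hs := sound d M N H).
  destruct (tvb M) eqn:TM; destruct (tvb N) eqn:TN; auto.
  - assert (tvb N = true); [|congruence]. apply tv_tvb. apply (sem_to_tv d); auto.
    intros n. rewrite <- Hs. apply tv_to_sem; auto. apply tv_tvb; auto.
  - assert (tvb M = true); [|congruence]. apply tv_tvb. apply (sem_to_tv d); auto.
    intros n. rewrite Hs. apply tv_to_sem; auto. apply tv_tvb; auto.
Qed.

Fixpoint hhv t := match t with Vr _ => True | Ar a b => hhv a \/ hhv b | _ => False end.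

Lemma hhv_topn : forall n, ~ hhv (topn n). Proof. destruct n; simpl; auto. Qed.
Lemma hhv_latD : forall t, ~ hhv (latD t).
Proof. induction t; simpl; tauto. Qed.
Lemma hhv_lat : forall d t, ~ hhv (lat d t).
Proof. intros [|] t; unfold lat; simpl; auto. apply hhv_latD. Qed.
Lemma hhv_arr : forall n a b, hhv (arr n a b) -> hhv a \/ hhv b.
Proof. intros n a b H. destruct (arr_cases n a b) as [[_ E]|[_ E]]; rewrite E in H; simpl in H; auto. Qed.

Lemma noHV_sem : forall d M, wf M -> G M -> forall n s, ~ hhv (I d n s M).
Proof. intros d M HM; induction HM; intros Hg lv s.
  - exfalso. apply (Hg n). simpl. auto.
  - destruct (tvb B) eqn:T.
    + rewrite tv_to_sem; [apply hhv_topn|constructor; auto|apply tv_tvb; rewrite tvb_arr; auto].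
    + destruct (G_arr A B Hg T). simpl. intros Hh. apply hhv_arr in Hh.
      destruct Hh; [eapply IHHM1|eapply IHHM2]; eauto.
  - destruct lv; simpl; auto. apply hhv_lat.
  - destruct (tvb (TMu A)) eqn:T.
    + rewrite tv_to_sem; [apply hhv_topn|constructor; auto|apply tv_tvb; auto].
    + destruct (combined A HM d) as [_ [GA CA]]. rewrite <- mu_fix by auto. unfold Fm.
      apply IHHM. apply G_mu; auto.
Qed.

Definition goodenv N (s : nat -> tree) := forall x k, N <= k -> trunc k (s x) <> topn k.

Lemma trunc_up : forall t n m, trunc n t = t -> n <= m -> trunc m t = t.
Proof. induction t; intros n m H Hk; simpl in *; auto.
  - destruct (arr_cases n (trunc n t1) (trunc n t2)) as [[E1 E2]|[E1 E2]]; rewrite E2 in H.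
    + exfalso. rewrite H in E1. eapply topn_not_ar; eauto.
    + inversion H. rewrite H1, H2 in *. rewrite (IHt1 n m), (IHt2 n m); auto.
      unfold arr. destruct (tree_eq_dec t2 (topn m)); auto. exfalso. apply E1.
      rewrite <- H2 at 1. rewrite e. apply trunc_topn. auto.
  - destruct n as [|n']; try discriminate. destruct m as [|m']; [lia|].
    injection H as H1. f_equal. apply (IHt n' m'); auto. lia.
Qed.

Lemma HV_sem : forall d M, wf M -> forall j, HV M j -> forall N, exists N2, forall s,
  goodenv N s -> (forall k, N <= k -> hhv (trunc k (s j))) -> forall n, N2 <= n -> hhv (I d n s M).
Proof. intros d M HM; induction HM; intros j Hh N; simpl in Hh.
  - destruct Hh as [_ E]; subst. exists N. intros s _ Hs n Hn. simpl. auto.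
  - destruct Hh as [T [H1|H2]].
    + rewrite tvb_arr in T. destruct (ti_free B HM2 T) as [jb [bb E]].
      destruct (IHHM1 j H1 N) as [N2 HN2]. exists (N2 + (N + tbul B)). intros s Hg Hs n Hn.
      simpl. assert (Hb : I d n s B <> topn n).
      { apply (NT d B HM2 jb bb E N s); [intros; apply Hg; auto | lia]. }
      unfold arr. destruct (tree_eq_dec (I d n s B) (topn n)); [congruence|]. simpl. left.
      apply HN2; auto; lia.
    + destruct (IHHM2 j H2 N) as [N2 HN2]. exists N2. intros s Hg Hs n Hn. simpl.
      unfold arr. destruct (tree_eq_dec _ _); simpl; auto.
  - destruct Hh as [_ []].
  - destruct Hh as [T Hh]. destruct (ti_free (TMu A) ltac:(constructor; auto) T) as [j0 [b0 E]].
    destruct (combined A HM d) as [_ [GA CA]].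
    destruct (IHHM (S j) Hh (N + tbul (TMu A))) as [N2 HN2]. exists N2. intros s Hg Hs n Hn.
    rewrite <- mu_fix by auto. unfold Fm. apply HN2; auto.
    + intros [|x] k Hk; cbv beta iota delta [scons].
      * destruct (le_lt_dec k n).
        -- change (trunc k (I d n s (TMu A)) <> topn k). destruct (combined (TMu A) ltac:(constructor; auto) d) as [_ [_ CM]].
           rewrite CM by auto. apply (NT d (TMu A) ltac:(constructor; auto) j0 b0 E N s); auto;
           intros; apply Hg; auto.
        -- rewrite (trunc_up _ n k) by (apply I_norm || lia). intros E2.
           assert (E3 := I_norm d (TMu A) n s). rewrite E2, trunc_topn in E3 by lia.
           apply topn_inj in E3. lia.
      * apply Hg. simpl in Hk. lia.
    + intros k Hk. cbv beta iota delta [scons]. apply Hs. lia.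
Qed.

Lemma Venv_good : goodenv 0 Venv.
Proof. intros x k _. unfold Venv. simpl. destruct k; discriminate. Qed.

Lemma Gpres : forall M N, simeq M N -> G M -> G N.
Proof. intros M N H Hg j Hj. destruct (eqty_wf _ _ _ H) as [HM HN].
  destruct (HV_sem true N HN j Hj 0) as [N2 HN2].
  assert (Hh := HN2 Venv Venv_good ltac:(intros; simpl; auto) N2 (le_n _)).
  rewrite <- (sound true M N H) in Hh. exact (noHV_sem true M HM Hg N2 Venv Hh). Qed.

Lemma BI : forall M N, simeq M N -> G M -> simeq (u M) (u N).
Proof. intros M N H; induction H; intros Hg.
  - apply eq_refl, wf_u; auto.
  - apply eq_sym, IHeqty. eapply Gpres; eauto. apply eq_sym; auto.
  - eapply eq_trans; eauto. apply IHeqty2. eapply Gpres; eauto.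
  - destruct (eqty_wf _ _ _ H) as [HA HB]. eapply eq_trans. apply u_lat; auto.
    eapply eq_trans. eauto. apply eq_sym, u_lat; auto.
  - assert (T := tvb_eq _ _ _ (eq_arr true A B C D H H0)).
    rewrite (u_eq (TArr A B)), (u_eq (TArr C D)). rewrite <- T. destruct (tvb (TArr A B)) eqn:TT.
    + apply eq_refl, wf_top.
    + rewrite tvb_arr in TT. destruct (G_arr A B Hg TT). apply eq_arr; auto.
  - rewrite (u_eq (TArr A top)), (u_eq top). simpl tvb. apply eq_refl, wf_top.
  - assert (T := tvb_eq _ _ _ (eq_unfold true A H H0)). destruct (tvb (TMu A)) eqn:TT.
    + rewrite (u_eq (TMu A)), (u_eq (subst0 A (TMu A))), <- T, TT. apply eq_refl, wf_top.
    + rewrite (u_eq (TMu A)), TT. unfold subst0. rewrite u_subst; auto.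
      * apply eq_refl. apply wf_u; auto.
      * apply proper_noHV. apply wf_inv_mu in H; tauto.
  - assert (T := tvb_eq _ _ _ (eq_contract true A C H H0 H1 H2 H3)). destruct (tvb A) eqn:TA.
    + rewrite (u_eq A), (u_eq (TMu C)), <- T, TA. apply eq_refl, wf_top.
    + rewrite (u_eq (TMu C)), <- T. eapply eq_trans. apply IHeqty; auto.
      unfold subst0. rewrite <- u_subst; auto.
      * apply cong_subst. apply wf_u. apply wf_inv_mu in H0; tauto.
        apply eq_contract; auto.
      * apply proper_noHV; auto.
  - rewrite (u_eq (TArr (TLat A) (TLat B))). rewrite tvb_arr, tvb_lat.
    destruct (tvb B) eqn:TB.
    + rewrite u_eq, tvb_lat. simpl tvb. rewrite tvb_arr, TB. apply eq_refl, wf_top.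
    + eapply eq_trans. apply u_lat; constructor; auto. apply eq_arr; apply eq_sym, u_lat; auto.
Qed.

Lemma bullet_inj : forall X Y, simeq (TLat X) (TLat Y) -> simeq X Y.
Proof. intros X Y H. destruct (eqty_wf _ _ _ H) as [HX HY].
  apply wf_inv_lat in HX. apply wf_inv_lat in HY.
  assert (Hg : G (TLat X)) by (intros j [_ []]).
  eapply eq_trans. apply eq_sym, u_lat; auto. eapply eq_trans. apply BI; eauto. apply u_lat; auto.
Qed.

Lemma latD_Ar : forall t x y, latD t = Ar x y -> ~ hhv x /\ ~ hhv y.
Proof. destruct t; simpl; intros x y H; inversion H; split; apply hhv_latD. Qed.

Lemma part2 : forall A B C, wf A -> wf B -> wf C ->
  simeq (TLat A) (TArr B C) ->
     (simeq A C /\ simeq C top) \/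
     (exists D E : ty, wf D /\ wf E /\
        simeq A (TArr D E) /\ simeq (TLat D) B /\ simeq (TLat E) C).
Proof. intros A B C HA HB HC H.
  assert (Es : forall n, I true (S n) Venv (TLat A) = I true (S n) Venv (TArr B C))
    by (intros; apply sound; auto).
  destruct (tvb C) eqn:TC.
  - left. assert (CT := TVT' true C HC (proj2 (tv_tvb C) TC)).
    assert (HA' : forall n, I true n Venv A = topn n).
    { intros n. specialize (Es n). simpl in Es. rewrite (tv_to_sem true C HC (proj2 (tv_tvb C) TC)) in Es.
      rewrite arr_top in Es. apply (lat_eq_topn true); exact Es. }
    apply sem_to_tv in HA'; auto. split; auto.
    eapply eq_trans. apply TVT'; eauto. apply eq_sym; auto.
  - right. destruct (ti_free C HC TC) as [jc [bc Ec]].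
    assert (Ar' : forall n, tbul C <= n -> exists a, lat true a = Ar (I true (S n) Venv B) (I true (S n) Venv C)).
    { intros n Hn. specialize (Es n). simpl in Es. exists (I true n Venv A). unfold lat. rewrite Es.
      unfold arr. destruct (tree_eq_dec _ _); auto. exfalso.
      eapply (NT true C HC jc bc Ec 0 Venv); [|apply le_S, Hn|eauto].
      intros; apply Venv_good; auto. }
    assert (GB : G B).
    { intros j Hj. destruct (HV_sem true B HB j Hj 0) as [N2 HN2].
      destruct (Ar' (N2 + tbul C) ltac:(lia)) as [a Ea]. unfold lat in Ea. apply latD_Ar in Ea.
      apply (proj1 Ea). apply HN2; [apply Venv_good | intros; simpl; auto | lia]. }
    assert (GC : G C).
    { intros j Hj. destruct (HV_sem true C HC j Hj 0) as [N2 HN2].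
      destruct (Ar' (N2 + tbul C) ltac:(lia)) as [a Ea]. unfold lat in Ea. apply latD_Ar in Ea.
      apply (proj2 Ea). apply HN2; [apply Venv_good | intros; simpl; auto | lia]. }
    exists (u B), (u C). repeat split; try apply wf_u; auto; try apply L1; auto.
    apply bullet_inj. eapply eq_trans. exact H. eapply eq_trans.
    apply eq_arr; apply eq_sym, L1; auto. apply eq_sym, eq_distr; auto; apply wf_u; auto.
Qed.

Theorem proposition4 (A B C : ty) :
  wf A -> wf B -> wf C ->
  (cong (TLat A) (TArr B C) -> cong A C /\ cong C top) /\
  (simeq (TLat A) (TArr B C) ->
     (simeq A C /\ simeq C top) \/
     (exists D E : ty, wf D /\ wf E /\
        simeq A (TArr D E) /\ simeq (TLat D) B /\ simeq (TLat E) C)).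
Proof. intros HA HB HC. split; [apply part1 | apply part2]; auto. Qed.
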